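(* Let $1\le j<k-1$ be integers. Consider the elections $F(j,k-1)$ and $F(j,k)$, whose voter sets are identified via their recursive construction (so both have the same voter set $N$, $|N|=2^j$). For each $v\in N$, let $A_v$ and $A'_v$ denote the ballot of $v$ in $F(j,k-1)$ and in $F(j,k)$, respectively. Then $|A'_v\setminus A_v|=1$, and the unique candidate in $A'_v\setminus A_v$ is a dummy candidate (an element of $\{d_1,d_2,\dots\}$).
   Context: Let $D_\ell=\{d_1,\dots,d_\ell\}$ be dummy candidates, with $D_0=\varnothing$ and $D_\ell\subseteq D_{\ell+1}$. Elections $F(j,k)$, for $1\le j<k$, with candidate set $D_{k-1}\cup\{a,b\}$ and committee size $k$, are defined recursively. $F(1,k)$ has two voters, voter 1 with ballot $D_{k-1}\cup\{a\}$ and voter 2 with ballot $D_{k-2}\cup\{b\}$. For $j>1$, take a copy of $F(j-1,k)$ with candidates $D_{k-1}\cup\{a_1,b_1\}$ and voter set $N_1$, and a copy of $F(j-1,k-1)$ with candidates $D_{k-2}\cup\{a_2,b_2\}$ and voter set $N_2$, disjoint from $N_1$; in every ballot of $N_1$ replace $a_1$ by $b$ and $b_1$ by $a$, in every ballot of $N_2$ replace $a_2$ by $a$ and $b_2$ by $b$; $F(j,k)$ has voters $N_1\cup N_2$ with these ballots. The identification of voters of $F(j,k-1)$ and $F(j,k)$ is the natural one: for $j=1$, voter 1 with voter 1 and voter 2 with voter 2; for $j>1$, the voters of the part $N_1$ (coming from $F(j-1,k-1)$ in $F(j,k-1)$, resp. from $F(j-1,k)$ in $F(j,k)$) are identified recursively,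 and likewise the voters of the part $N_2$ (coming from $F(j-1,k-2)$, resp. $F(j-1,k-1)$). *)

(* Defs.v *)
From mathcomp Require Import all_boot finmap.
Set Implicit Arguments. Unset Strict Implicit. Unset Printing Implicit Defensive.
Local Open Scope fset_scope.

(* Candidates: [inl i] is the dummy candidate d_i (i >= 1),
   [inr true] is candidate a, [inr false] is candidate b. *)
Definition cand := (nat + bool)%type.
Definition dummy (i : nat) : cand := inl i.
Definition ca : cand := inr true.
Definition cb : cand := inr false.

Definition Dset (l : nat) : {fset cand} := [fset dummy i | i in iota 1 l].

Definition swap_ab (x : cand) : cand :=
  match x with inl i => inl i | inr t => inr (~~ t) end.

Definition swap_ballot (A : {fset cand}) : {fset cand} := [fset swap_ab x | x in A].

(* An election is the list of ballots of its voters; voter = position in the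
   list.  F(j,k) = (N_1 part: copy of F(j-1,k) with a,b exchanged)
                   ++ (N_2 part: copy of F(j-1,k-1)). *)
Fixpoint F (j k : nat) : seq {fset cand} :=
  match j with
  | 0 => [::]
  | j'.+1 =>
    match j' with
    | 0 => [:: Dset (k - 1) `|` [fset ca]; Dset (k - 2) `|` [fset cb]]
    | _ => map swap_ballot (F j' k) ++ F j' (k - 1)
    end
  end.

(* Main.v *)
Require Import Defs.
From mathcomp Require Import all_boot finmap zify.
Local Open Scope fset_scope.

Lemma mem_Dset x l : (x \in Dset l) = (match x with inl i => (0 < i <= l) | inr _ => false end).
Proof.
apply/imfsetP/idP => [[y /= + ->]|].
  by rewrite mem_iota /dummy; lia.
case: x => // i H; exists i => //=; rewrite mem_iota; lia.
Qed.

Lemma swapK : involutive swap_ab. Proof. by case=> //= [[]]. Qed.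

Lemma mem_swap x A : (x \in swap_ballot A) = (swap_ab x \in A).
Proof.
apply/imfsetP/idP => [[y /= yA ->]|H]; first by rewrite swapK.
by exists (swap_ab x); rewrite ?swapK.
Qed.

Lemma key j : forall k, j.+1 < k - 1 ->
  size (F j.+1 (k-1)) = 2^j.+1 /\ size (F j.+1 k) = 2^j.+1 /\
  forall v, v < 2^j.+1 -> exists i, 0 < i /\
    nth fset0 (F j.+1 k) v `\` nth fset0 (F j.+1 (k-1)) v = [fset dummy i].
Proof.
elim: j => [|j IH] k Hk.
  split; first by []. split; first by [].
  case=> [|[|v]] //= _.
    exists (k-1); split; first lia.
    apply/fsetP => -[i|t]; rewrite !inE !mem_Dset /dummy /ca /=.
      rewrite /= ?orbF; apply/idP/idP; [move=> H; apply/eqP; congr inl | case/eqP => ->]; lia.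
    by case: t.
  exists (k-2); split; first lia.
  apply/fsetP => -[i|t]; rewrite !inE !mem_Dset /dummy /cb /=.
    rewrite /= ?orbF; apply/idP/idP; [move=> H; apply/eqP; congr inl | case/eqP => ->]; lia.
  by case: t.
have [s1 [s2 H1]] := IH k ltac:(lia).
have [s3 [s4 H2]] := IH (k-1) ltac:(lia).
change (F j.+2 k) with (map swap_ballot (F j.+1 k) ++ F j.+1 (k-1)).
change (F j.+2 (k-1)) with (map swap_ballot (F j.+1 (k-1)) ++ F j.+1 (k-1-1)).
rewrite !size_cat !size_map s1 s2 s3 !expnS; split; first lia; split; first lia.
move=> v Hv; rewrite !nth_cat !size_map s1 s2.
case: ifP => Hv1.
  have [i [ip Hi]] := H1 v Hv1.
  exists i; split => //.
  rewrite (nth_map fset0) ?s2 // (nth_map fset0) ?s1 //.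
  apply/fsetP => x; move/fsetP: Hi => /(_ (swap_ab x)).
  rewrite !inE !mem_swap => ->.
  by case: x => [y|t] /=; rewrite /dummy //; case: t.
apply: H2; move: Hv Hv1; rewrite !expnS => Hv /negbT; rewrite -leqNgt; lia.
Qed.

Theorem proposition10 (j k : nat) :
  1 <= j -> j < k - 1 ->
  size (F j (k - 1)) = 2 ^ j /\ size (F j k) = 2 ^ j /\
  forall v : nat, v < 2 ^ j ->
    let A := nth fset0 (F j (k - 1)) v in
    let A' := nth fset0 (F j k) v in
    #|` A' `\` A | = 1 /\
    exists i : nat, 1 <= i /\ A' `\` A = [fset dummy i].
Proof.
case: j => // j _ Hk.
have [s1 [s2 H]] := @key j k Hk.
split=> //; split=> // v Hv /=.
have [i [ip Hi]] := H v Hv.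
by rewrite Hi cardfs1; split=> //; exists i.
Qed.
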